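(* Let $G$ be a Borel groupoid. If there is a proper Borel $G$-space $X$ such that the moment map $r_X:X\to G^{(0)}$ is Borel amenable ($G$-amenable), then $G$ is Borel amenable.
   Context: All Borel spaces are analytic. A Borel $G$-space $X$ has a Borel moment map $r_X:X\to G^{(0)}$ and Borel action $\gamma\cdot x$ defined when $s(\gamma)=r_X(x)$; $G$ acts on $G^{(0)}$ by $\gamma\cdot s(\gamma)=r(\gamma)$. For a Borel surjection $\pi:X\to Y$, a $\pi$-system is a family $\{m^y\}$ of measures with $m^y$ supported in $\pi^{-1}(y)$ and $y\mapsto\int f\,dm^y$ Borel for all nonnegative Borel $f$. A surjective Borel $G$-map $\pi$ is $G$-properly amenable if there is a $\pi$-system of probability measures with $\gamma\cdot m^y=m^{\gamma\cdot y}$, and $G$-amenable if there is a sequence of $\pi$-systems $m_n$ of probability measures with $\|\gamma\cdot m_n^y-m_n^{\gamma\cdot y}\|_1\to0$ for all composable $\gamma,y$ (total variation norm; $(\gamma\cdot m)(E)=m(\gamma^{-1}E)$). $X$ is a proper $G$-space if the projection $X*G\to X$, $X*G=\{(x,\gamma):r_X(x)=r(\gamma)\}$ with diagonal action, is $G$-properly amenable. $G$ is Borel amenable if $r:G\to G^{(0)}$ is $G$-amenable. *)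

(* Defs.v *)
From HB Require Import structures.
From mathcomp Require Import all_boot all_order all_algebra.
From mathcomp Require Import all_classical all_reals all_analysis.
From mathcomp Require Import measurable_realfun.
Set Implicit Arguments. Unset Strict Implicit. Unset Printing Implicit Defensive.
Import Order.TTheory GRing.Theory Num.Theory.
Local Open Scope classical_set_scope.
Local Open Scope ring_scope.

(* Analytic Borel spaces: Borel isomorphic to an analytic subset of R  *)
Section Analytic.
Context (R : realType).

Definition analytic_set (A : set R) : Prop :=
  exists B : set (R * R)%type, measurable B /\ A = fst @` B.

Definition analytic_space {d} (T : measurableType d) : Prop :=
  exists f : T -> R,
    [/\ injective f, measurable_fun setT f, analytic_set (range f) &
        forall E : set T, measurable E ->
          exists B : set R, measurable B /\ f @` E = range f `&` B].
End Analytic.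

(* Borel groupoids.  The unit space is a separate Borel space G0,      *)
(* embedded in G by [gunit].                                           *)
Record borel_groupoid {dG d0} (G : measurableType dG) (G0 : measurableType d0) :=
  BorelGroupoid {
  gunit : G0 -> G;
  grg : G -> G0;
  gsr : G -> G0;
  gmul : G -> G -> G;
  ginv : G -> G;
  grg_unit : forall u, grg (gunit u) = u;
  gsr_unit : forall u, gsr (gunit u) = u;
  grg_mul : forall g h, gsr g = grg h -> grg (gmul g h) = grg g;
  gsr_mul : forall g h, gsr g = grg h -> gsr (gmul g h) = gsr h;
  gmulA : forall g h k, gsr g = grg h -> gsr h = grg k ->
            gmul (gmul g h) k = gmul g (gmul h k);
  gmul1g : forall g, gmul (gunit (grg g)) g = g;
  gmulg1 : forall g, gmul g (gunit (gsr g)) = g;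
  grg_inv : forall g, grg (ginv g) = gsr g;
  gsr_inv : forall g, gsr (ginv g) = grg g;
  gmulgV : forall g, gmul g (ginv g) = gunit (grg g);
  gmulVg : forall g, gmul (ginv g) g = gunit (gsr g);
  gunit_meas : measurable_fun setT gunit;
  grg_meas : measurable_fun setT grg;
  gsr_meas : measurable_fun setT gsr;
  ginv_meas : measurable_fun setT ginv;
  gmul_meas : measurable_fun [set p : (G * G)%type | gsr p.1 = grg p.2]
                (fun p => gmul p.1 p.2)
}.

Section GSpaces.
Context {dG d0} {G : measurableType dG} {G0 : measurableType d0}
  (GG : borel_groupoid G G0).

Record borel_Gspace {dX} (X : measurableType dX) := BorelGSpace {
  gs_mom : X -> G0;
  gs_act : G -> X -> X;
  gs_mom_act : forall g x, gsr GG g = gs_mom x ->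
                 gs_mom (gs_act g x) = grg GG g;
  gs_act1 : forall x, gs_act (gunit GG (gs_mom x)) x = x;
  gs_actM : forall g h x, gsr GG g = grg GG h -> gsr GG h = gs_mom x ->
              gs_act (gmul GG g h) x = gs_act g (gs_act h x);
  gs_mom_meas : measurable_fun setT gs_mom;
  gs_act_meas : measurable_fun [set p : (G * X)%type | gsr GG p.1 = gs_mom p.2]
                  (fun p => gs_act p.1 p.2)
}.

Context (R : realType).
Local Open Scope ereal_scope.

(* In the definitions below a G-space is given by raw data: a Borel space
   Z, a G-invariant carrier set D : set Z (the actual space, so that
   subspaces such as X*G can be handled inside an ambient product; D = setT
   otherwise), a moment map mZ and an action actZ. *)

Definition pi_system {dZ dY} {Z : measurableType dZ} {Y : measurableType dY}
  (D : set Z) (pi : Z -> Y) (m : Y -> {measure set Z -> \bar R}) : Prop :=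
  (forall y (A : set Z), measurable A ->
      A `&` (D `&` pi @^-1` [set y]) = set0 -> m y A = 0) /\
  (forall f : Z -> \bar R, measurable_fun setT f -> (forall z, 0 <= f z) ->
      measurable_fun setT (fun y => \int[m y]_z f z)).

Definition prob_system {dZ dY} {Z : measurableType dZ} {Y : measurableType dY}
  (m : Y -> {measure set Z -> \bar R}) : Prop :=
  forall y, m y setT = 1.

(* (g . m)(E) = m(g^{-1} E) *)
Definition gpush {dZ} {Z : measurableType dZ} (mZ : Z -> G0)
  (actZ : G -> Z -> Z) (g : G) (m : set Z -> \bar R) : set Z -> \bar R :=
  fun E => m [set z | mZ z = gsr GG g /\ E (actZ g z)].

Definition tvnorm {dZ} {Z : measurableType dZ} (mu nu : set Z -> \bar R)
  : \bar R :=
  ereal_sup [set x | exists (n : nat) (F : nat -> set Z),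
     [/\ forall i, measurable (F i), trivIset setT F &
         x = \sum_(i < n) `| mu (F i) - nu (F i) | ] ].

Definition borel_Gmap {dZ dY} {Z : measurableType dZ} {Y : measurableType dY}
  (D : set Z) (mZ : Z -> G0) (actZ : G -> Z -> Z)
  (mY : Y -> G0) (actY : G -> Y -> Y) (pi : Z -> Y) : Prop :=
  [/\ measurable_fun setT pi, pi @` D = setT,
      forall z, D z -> mY (pi z) = mZ z &
      forall g z, D z -> gsr GG g = mZ z -> pi (actZ g z) = actY g (pi z)].

Definition G_properly_amenable {dZ dY} {Z : measurableType dZ}
  {Y : measurableType dY}
  (D : set Z) (mZ : Z -> G0) (actZ : G -> Z -> Z)
  (mY : Y -> G0) (actY : G -> Y -> Y) (pi : Z -> Y) : Prop :=
  borel_Gmap D mZ actZ mY actY pi /\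
  exists m : Y -> {measure set Z -> \bar R},
    [/\ pi_system D pi m, prob_system m &
        forall g y, gsr GG g = mY y -> forall E, measurable E ->
          gpush mZ actZ g (m y) E = m (actY g y) E].

Definition G_amenable {dZ dY} {Z : measurableType dZ} {Y : measurableType dY}
  (D : set Z) (mZ : Z -> G0) (actZ : G -> Z -> Z)
  (mY : Y -> G0) (actY : G -> Y -> Y) (pi : Z -> Y) : Prop :=
  borel_Gmap D mZ actZ mY actY pi /\
  exists m : nat -> Y -> {measure set Z -> \bar R},
    [/\ forall n, pi_system D pi (m n), forall n, prob_system (m n) &
        forall g y, gsr GG g = mY y ->
          (fun n => tvnorm (gpush mZ actZ g (m n y)) (m n (actY g y)))
             @ \oo --> 0].

(* G acting on its unit space: g . s(g) = r(g) *)
Definition unit_act (g : G) (u : G0) : G0 := grg GG g.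

(* X is proper: the projection X*G -> X is G-properly amenable, where
   X*G = {(x,g) | mX x = r g} sits inside X x G, with diagonal action. *)
Definition proper_Gspace {dX} {X : measurableType dX} (XX : borel_Gspace X)
  : Prop :=
  G_properly_amenable
    [set p : (X * G)%type | gs_mom XX p.1 = grg GG p.2]
    (fun p => grg GG p.2)
    (fun h p => (gs_act XX h p.1, gmul GG h p.2))
    (gs_mom XX) (gs_act XX) fst.

Definition borel_amenable : Prop :=
  G_amenable setT (grg GG) (gmul GG) id unit_act (grg GG).

End GSpaces.

(* Main.v *)
Require Import Defs.
From HB Require Import structures.
From mathcomp Require Import all_boot all_order all_algebra.
From mathcomp Require Import all_classical all_reals all_analysis.
From mathcomp Require Import measurable_realfun.
Set Implicit Arguments. Unset Strict Implicit. Unset Printing Implicit Defensive.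
Import Order.TTheory GRing.Theory Num.Theory.
Local Open Scope classical_set_scope.
Local Open Scope ring_scope.

From mathcomp Require Import lra.
Lemma meas_eq_set (R : realType) {d0 d1 d2} (G0 : measurableType d0)
  (A : measurableType d1) (B : measurableType d2) (an : analytic_space R G0)
  (a : A -> G0) (b : B -> G0) (ma : measurable_fun setT a)
  (mb : measurable_fun setT b) :
  measurable [set p : (A * B)%type | a p.1 = b p.2].
Proof.
have [f0 [inj mf0 _ _]] := an.
have h := @measurable_fun_eqr _ _ R setT (f0 \o a \o fst) (f0 \o b \o snd).
have := h (measurableT_comp mf0 (measurableT_comp ma measurable_fst))
  (measurableT_comp mf0 (measurableT_comp mb measurable_snd)) measurableT
  [set true] ltac:(by []).
rewrite setTI; congr measurable; apply/seteqP; split => p /=.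
  by move/eqP => /inj.
by move=> /= ->; apply/eqP.
Qed.

Lemma meas_section {d0 dA dB dC} (G0 : measurableType d0)
  (A : measurableType dA) (B : measurableType dB) (C : measurableType dC)
  (a : A -> G0) (b : B -> G0)
  (mD : measurable [set p : (A * B)%type | a p.1 = b p.2])
  (f : (A * B)%type -> C)
  (mf : measurable_fun [set p : (A * B)%type | a p.1 = b p.2] f)
  (a0 : A) (E : set C) (mE : measurable E) :
  measurable [set x : B | a a0 = b x /\ E (f (a0, x))].
Proof.
have h1 := mf mD E mE.
have := @measurable_fun_pair _ _ _ B A B (cst a0) id (measurable_cst a0)
  (@measurable_id _ B setT) measurableT _ h1.
by rewrite setTI.
Qed.

Lemma ereal_aux (R : realType) (a b c c' : \bar R) :
  a \is a fin_num -> b \is a fin_num -> c \is a fin_num -> c' \is a fin_num ->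
  (0 <= c)%E -> (0 <= c')%E -> (a + c' = b + c)%E ->
  (`|a - b| <= c + c')%E.
Proof.
move=> fa fb fc fc'.
rewrite -(fineK fa) -(fineK fb) -(fineK fc) -(fineK fc').
move: (fine a) (fine b) (fine c) (fine c') => x y z w.
rewrite !lee_fin -!EFinD => z0 w0 [e].
rewrite ler_norml; apply/andP; split; lra.
Qed.

Section finM.
Context (R : realType) d (T : measurableType d) (m : {measure set T -> \bar R})
  (fm : (m setT < +oo)%E).
Definition finM of (m setT < +oo)%E : set T -> \bar R := m.
HB.instance Definition _ := Measure.on (finM fm).
Let ff : fin_num_fun (finM fm).
Proof.
move=> U mU; rewrite ge0_fin_numE ?measure_ge0//.
by rewrite (le_lt_trans _ fm)// le_measure// inE.
Qed.
HB.instance Definition _ := Measure_isFinite.Build _ T R (finM fm) ff.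
End finM.

Local Open Scope ereal_scope.
Lemma tv_mix (R : realType) d (T : measurableType d)
  (al be : {measure set T -> \bar R})
  (fa : (al setT < +oo)%E) (fb : (be setT < +oo)%E) (n : nat)
  (phi : nat -> T -> \bar R) (mphi : forall i, measurable_fun setT (phi i))
  (phi0 : forall i x, (0 <= phi i x)%E)
  (phi1 : forall x, (\sum_(i < n) phi i x <= 1)%E) :
  (\sum_(i < n) `| \int[al]_x phi i x - \int[be]_x phi i x | <= tvnorm al be)%E.
Proof.
pose nu := cadd (charge_of_finite_measure (finM fa)) (copp (charge_of_finite_measure (finM fb))).
have nuE A : nu A = (al A - be A)%E by [].
have [P [N hPN]] := Hahn_decomposition nu.
have [[mP _] [mN _] PUN PIN] := hPN.
pose rho := jordan_pos hPN; pose rho' := jordan_neg hPN.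
have finA (m : {measure set T -> \bar R}) A : (m setT < +oo)%E -> measurable A ->
    m A \is a fin_num.
  move=> fm mA; rewrite ge0_fin_numE ?measure_ge0//.
  by rewrite (le_lt_trans _ fm)// le_measure// inE.
have rhoT : (rho setT < +oo)%E.
  by rewrite -ge0_fin_numE ?measure_ge0 //; exact: (fin_num_measure rho setT measurableT).
have rho'T : (rho' setT < +oo)%E.
  by rewrite -ge0_fin_numE ?measure_ge0 //; exact: (fin_num_measure rho' setT measurableT).
have alg (a b c c' : \bar R) : a \is a fin_num -> b \is a fin_num ->
    c \is a fin_num -> c' \is a fin_num ->
    (a - b = c + (-1)%:E * c')%E -> (a + c' = b + c)%E.
  move=> fa' fb' fc fc'.
  rewrite -(fineK fa') -(fineK fb') -(fineK fc) -(fineK fc').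
  rewrite -EFinB -EFinM -EFinD => -[e]; rewrite -!EFinD; congr (_%:E); lra.
have decomp A : measurable A -> (al A + rho' A = be A + rho A)%E.
  move=> mA; have e0 := jordan_decomp hPN mA.
  apply: alg; [exact: finA fa mA|exact: finA fb mA|exact: finA rhoT mA|
    exact: finA rho'T mA|exact: e0].
have phi_le1 (i : 'I_n) x : (phi i x <= 1)%E.
  apply: le_trans (phi1 x); rewrite (bigD1 i) //=; apply: leeDl.
  by apply: sume_ge0 => j _; exact: phi0.
have int_fin (m : {measure set T -> \bar R}) (i : 'I_n) : (m setT < +oo)%E ->
    \int[m]_x phi i x \is a fin_num.
  move=> fm; rewrite ge0_fin_numE; last by apply: integral_ge0 => x _.
  apply: le_lt_trans fm; apply: (@le_trans _ _ (\int[m]_x (cst 1%E x))).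
    apply: ge0_le_integral => //.
  by rewrite integral_cst // mul1e.
have int_eq (i : 'I_n) : (\int[al]_x phi i x + \int[rho']_x phi i x =
    \int[be]_x phi i x + \int[rho]_x phi i x)%E.
  rewrite -!ge0_integral_measure_add //; try by move=> x _; exact: phi0.
  apply: eq_measure_integral => A mA _.
  exact: (etrans (measure_addE _ _ _) (etrans (decomp A mA) (esym (measure_addE _ _ _)))).
apply: (@le_trans _ _ (\sum_(i < n) (\int[rho]_x phi i x + \int[rho']_x phi i x))%E).
  apply: lee_sum => i _; apply: ereal_aux; try exact: int_fin.
  - by apply: integral_ge0 => x _.
  - by apply: integral_ge0 => x _.
  - by rewrite int_eq.
rewrite big_split /=.
rewrite -!(ge0_integral_sum _ measurableT (fun i : 'I_n => mphi i));
  try by move=> i x _; exact: phi0.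
have sum_le (m : {measure set T -> \bar R}) :
    \int[m]_x (\sum_(k < n) phi k x) <= m setT.
  apply: (@le_trans _ _ (\int[m]_x (cst 1%E x))); last by rewrite integral_cst // mul1e.
  apply: ge0_le_integral => //.
  - by move=> x _; apply: sume_ge0 => i _; exact: phi0.
  - by apply: emeasurable_sum => i; exact: mphi.
apply: (@le_trans _ _ (rho setT + rho' setT)%E); first exact: leeD.
have rhoE : rho setT = (al P - be P)%E.
  by rewrite /rho jordan_posE cjordan_posE /crestr0 mem_set // /crestr setTI.
have rho'E : rho' setT = (- (al N - be N))%E.
  by rewrite /rho' jordan_negE cjordan_negE /crestr0 mem_set // /crestr setTI.
apply: (@le_trans _ _ (`|al P - be P| + `|al N - be N|)%E).
  rewrite rhoE rho'E; apply: leeD; first exact: lee_abs.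
  by rewrite -abseN; exact: lee_abs.
pose F (i : nat) : set T := if i == 0%N then P else if i == 1%N then N else set0.
apply: ereal_sup_ubound; exists 2%N, F; split.
- move=> [|[|i]]; rewrite /F /=; [exact: mP|exact: mN|exact: measurable0].
- apply/trivIsetP => i j _ _.
  case: i => [|[|i]]; case: j => [|[|j]] //= _; rewrite /F /=;
    by [rewrite PIN|rewrite setIC PIN|rewrite setI0|rewrite set0I].
- by rewrite !big_ord_recr big_ord0 /= add0e.
Qed.

Lemma fam_meas (R : realType) d d' (Y : measurableType d) (Z : measurableType d')
  (m : Y -> {measure set Z -> \bar R})
  (hm : forall f : Z -> \bar R, measurable_fun setT f -> (forall z, 0 <= f z) ->
     measurable_fun setT (fun y => \int[m y]_z f z))
  (A : set Z) (mA : measurable A) : measurable_fun setT (fun y => m y A).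
Proof.
have := hm (fun z => (\1_A z)%:E) _ _.
have -> : (fun y => \int[m y]_z (\1_A z)%:E) = (fun y => m y A).
  by apply/funext => y; rewrite integral_indic // setIT.
apply.
  by apply/measurable_EFinP; exact: measurable_indic.
by move=> z; rewrite lee_fin.
Qed.

Section kers.
Context (R : realType) d d' (T : measurableType d) (U : measurableType d').
Variable m : T -> {measure set U -> \bar R}.
Hypothesis mm : forall A, measurable A -> measurable_fun setT (m ^~ A).
Hypothesis pm : forall t, m t setT = 1.
Definition kerOf of (forall A, measurable A -> measurable_fun setT (m ^~ A))
  & (forall t, m t setT = 1) : T -> {measure set U -> \bar R} := m.
HB.instance Definition _ := isKernel.Build _ _ T U R (kerOf mm pm) mm.
HB.instance Definition _ := Kernel_isProbability.Build _ _ T U R (kerOf mm pm) pm.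
End kers.

Definition PF (R : realType) d d' (T1 : measurableType d) (T2 : measurableType d')
  (m : {measure set T1 -> \bar R}) (f : T1 -> T2) (mf : measurable_fun setT f)
  : {measure set T2 -> \bar R} :=
  @measure_function_pushforward__canonical__measure_function_Measure d d' T1 T2 R m f mf.

Lemma PF_integral (R : realType) d d' (T1 : measurableType d) (T2 : measurableType d')
  (m : {measure set T1 -> \bar R}) (f : T1 -> T2) (mf : measurable_fun setT f)
  (h : T2 -> \bar R) : measurable_fun setT h -> (forall x, 0 <= h x) ->
  \int[PF m mf]_x h x = \int[m]_x h (f x).
Proof. by move=> mh h0; rewrite (ge0_integral_pushforward mf m measurableT). Qed.

Unset Implicit Arguments.
Theorem lemma2p7 (R : realType) (dG d0 dX : measure_display)
  (G : measurableType dG) (G0 : measurableType d0) (X : measurableType dX)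
  (GG : borel_groupoid G G0)
  (anG : analytic_space R G) (anG0 : analytic_space R G0)
  (anX : analytic_space R X)
  (XX : borel_Gspace GG X)
  (Xproper : proper_Gspace R XX)
  (rXam : G_amenable GG R setT (gs_mom XX) (gs_act XX) id (unit_act GG)
            (gs_mom XX)) :
  borel_amenable GG R.
Proof.
move: Xproper; rewrite /proper_Gspace /G_properly_amenable => -[_ [mu [[mu_supp mu_int] mu_prob mu_eq]]].
move: rXam; rewrite /G_amenable => -[_ [m [mpi mprob mconv]]].
set act := gs_act XX; set rX := gs_mom XX.
pose phi (E : set G) (x : X) := mu x (snd @^-1` E).
have mphi E : measurable E -> measurable_fun setT (phi E).
  move=> mE; apply: (fam_meas mu_int).
  by rewrite -[X in measurable X]setTI; exact: measurable_snd.
have phi0 E x : 0 <= phi E x by [].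
have phi1 E x : measurable E -> phi E x <= 1.
  move=> mE; rewrite /phi -(mu_prob x); apply: le_measure; rewrite ?inE //.
  by rewrite -[X in measurable X]setTI; exact: measurable_snd.
have mmk n : forall A, measurable A -> measurable_fun setT ((m n) ^~ A).
  by move=> A mA; exact: (fam_meas (mpi n).2 mA).
pose l n := kerOf (mmk n) (mprob n).
pose kk0 (p : (G0 * X)%type) : {measure set G -> \bar R} := PF (mu p.2) measurable_snd.
have mkk : forall A, measurable A -> measurable_fun setT (kk0 ^~ A).
  by move=> A mA; exact: (measurableT_comp (mphi A mA) measurable_snd).
have pkk : forall p, kk0 p setT = 1.
  by move=> p; rewrite /kk0 /= /pushforward preimage_setT mu_prob.
pose kk := kerOf mkk pkk.
pose nu n : G0 -> {measure set G -> \bar R} := mkcomp (l n) kk.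
have nuE n u A : nu n u A = \int[m n u]_x phi A x by [].
have nu_int n u (f : G -> \bar R) : measurable_fun setT f -> (forall z, 0 <= f z) ->
    \int[nu n u]_z f z = \int[m n u]_x (\int[mu x]_p f p.2).
  move=> mf f0; rewrite /nu /mkcomp integral_kcomp //.
  by apply: eq_integral => x _; rewrite /kk /kerOf /kk0 PF_integral.
rewrite /borel_amenable /G_amenable; split.
  split.
  - exact: grg_meas.
  - apply/seteqP; split => // u _; exists (gunit GG u) => //; exact: grg_unit.
  - by [].
  - by move=> g z _ sgz; rewrite /unit_act grg_mul.
exists nu; split.
- move=> n; split.
  + move=> y A mA hA; rewrite nuE.
    pose N := [set x | phi A x != 0].
    have mN : measurable N.
      by have := emeasurable_neq measurableT (mphi A mA) 0; rewrite setTI.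
    have phiA x : rX x = y -> phi A x = 0.
      move=> rxy; apply: mu_supp.
        by rewrite -[X in measurable X]setTI; exact: measurable_snd.
      apply/seteqP; split => // -[x' h] [/= Ah [/= Dp fp]].
      have : (A `&` (setT `&` grg GG @^-1` [set y])) h.
        by split => //; split => //=; rewrite -Dp fp.
      by rewrite hA.
    have mN0 : m n y N = 0.
      apply: (mpi n).1 => //; apply/seteqP; split => // x [/= Nx [_ /= rxy]].
      by move: Nx => /eqP; apply; exact: phiA.
    apply/eqP; rewrite eq_le integral_ge0 ?andbT //.
    apply: (@le_trans _ _ (\int[m n y]_x (\1_N x)%:E)).
      apply: ge0_le_integral => //.
      - exact: mphi.
      - by apply/measurable_EFinP; exact: measurable_indic.
      - move=> x _; have [->|nz] := eqVneq (phi A x) 0; first by rewrite lee_fin.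
        by rewrite indicE mem_set // phi1.
    by rewrite integral_indic // setIT mN0.
  + move=> f mf f0.
    have -> : (fun y => \int[nu n y]_z f z) =
        (fun y => \int[m n y]_x (\int[mu x]_p f p.2)).
      by apply/funext => y; exact: nu_int.
    apply: (mpi n).2.
      apply: (mu_int (fun p => f p.2)).
        exact: (measurableT_comp mf measurable_snd).
      by move=> p; exact: f0.
    by move=> x; apply: integral_ge0 => p _; exact: f0.
- move=> n u; rewrite /prob_system nuE.
  under eq_integral => x _ do rewrite /phi preimage_setT mu_prob.
  by rewrite integral_cst // mul1e mprob.
move=> g y /= sgy.
have Hc := mconv g y sgy.
have mDX := meas_eq_set anG0 (gsr_meas GG) (gs_mom_meas XX).
have mDG := meas_eq_set anG0 (gsr_meas GG) (grg_meas GG).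
pose S := [set x | gsr GG g = rX x].
have mS : measurable S.
  have := meas_section mDX (gs_act_meas (b:=XX)) g measurableT.
  by congr measurable; apply/seteqP; split => x /= [].
pose t x := if `[< S x >] then act g x else x.
have mt : measurable_fun setT t.
  move=> _ B mB; rewrite setTI.
  have -> : t @^-1` B = [set x | gsr GG g = rX x /\ B (act g x)] `|` (~` S `&` B).
    apply/seteqP; split => x; rewrite /t /=; case: asboolP => Sx.
    - by move=> Bx; left.
    - by move=> Bx; right.
    - by case => [[]|[]].
    - by case => [[/Sx]|[]].
  apply: measurableU; first exact: (meas_section mDX (gs_act_meas (b:=XX)) g mB).
  exact: measurableI (measurableC mS) mB.
have mtB B : measurable B -> measurable (t @^-1` B).
  by move=> mB; have := mt measurableT B mB; rewrite setTI.
pose alpha n := PF (m n y) mt.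
have mSc n : m n y (~` S) = 0.
  apply: (mpi n).1; first exact: measurableC.
  by apply/seteqP; split => // x [/= nSx [_ /= rxy]]; apply: nSx; exact: (etrans sgy (esym rxy)).
have restr n A : measurable A -> m n y A = m n y (A `&` S).
  move=> mA; rewrite (measureDI (m n y) mA mS).
  rewrite [X in X + _](_ : _ = 0) ?add0e //.
  apply/eqP; rewrite eq_le measure_ge0 andbT -(mSc n).
  by apply: le_measure; rewrite ?inE //; [exact: measurableD|exact: measurableC].
have gpushE n F : measurable F -> gpush GG rX act g (m n y) F = alpha n F.
  move=> mF; rewrite /gpush /alpha /PF /= /pushforward (restr n _ (mtB F mF)).
  congr (m n y _); apply/seteqP; split => x /=.
  - move=> [e Fx]; have Sx : S x by rewrite /S /= e.
    by split => //; rewrite /t asboolT.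
  - by move=> [+ Sx]; rewrite /t asboolT // => Fx; split.
have tvE n (be : set X -> \bar R) :
    tvnorm (gpush GG rX act g (m n y)) be = tvnorm (alpha n) be.
  rewrite /tvnorm; congr ereal_sup; apply/seteqP; split => z [k [F [mF tF ->]]];
    exists k, F; split => //; apply: eq_bigr => i _; rewrite gpushE //.
have mE' E : measurable E -> measurable [set h | grg GG h = gsr GG g /\ E (gmul GG g h)].
  move=> mE; have := meas_section mDG (gmul_meas (b:=GG)) g mE.
  by congr measurable; apply/seteqP; split => h /= [e Eh]; split.
have phiE'S E x : measurable E -> S x ->
    phi [set h | grg GG h = gsr GG g /\ E (gmul GG g h)] x = phi E (act g x).
  move=> mE Sx; rewrite /phi -(mu_eq g x Sx (snd @^-1` E)) //.
  by rewrite -[X in measurable X]setTI; exact: measurable_snd.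
have phiE'nS E x : measurable E -> ~ S x ->
    phi [set h | grg GG h = gsr GG g /\ E (gmul GG g h)] x = 0.
  move=> mE nSx; apply: mu_supp.
    by rewrite -[X in measurable X]setTI; apply: measurable_snd => //; exact: mE'.
  apply/seteqP; split => // -[x' h] [/= [e Eh] [/= Dp fp]].
  by apply: nSx; have : gsr GG g = gs_mom XX x by rewrite -fp Dp e.
have pushint n E : measurable E ->
    gpush GG (grg GG) (gmul GG) g (nu n y) E = \int[alpha n]_x phi E x.
  move=> mE; rewrite /gpush nuE /alpha PF_integral //; last exact: mphi.
  apply: ge0_ae_eq_integral => //.
  - exact: mphi (mE' E mE).
  - exact: measurableT_comp (mphi E mE) mt.
  - exists (~` S); split => //; first exact: measurableC.
    move=> x /= h Sx; apply: h => _; rewrite phiE'S //.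
    by rewrite /t asboolT.
apply: (@squeeze_cvge _ _ _ R (fun=> 0) _
  (fun n => tvnorm (gpush GG rX act g (m n y)) (m n (unit_act GG g y))));
  [|exact: cvg_cst|exact: Hc].
apply: nearW => n; apply/andP; split.
  apply: ereal_sup_ubound; exists 0%N, (fun _ => set0); split => //.
    by apply/trivIsetP => i j _ _ _; rewrite setI0.
  by rewrite big_ord0.
rewrite tvE; apply: ge_ereal_sup => z [k [F [mF tF ->]]].
under eq_bigr => i _ do rewrite pushint // nuE.
apply: (@tv_mix _ _ _ _ _ _ _ k (fun i => phi (F i))).
- by rewrite /alpha /PF /= /pushforward preimage_setT mprob ltry.
- by rewrite mprob ltry.
- by move=> i; exact: mphi.
- by [].
- move=> x; rewrite /phi -measure_semi_additive_ord.
  + rewrite -(mu_prob x); apply: le_measure; rewrite ?inE //.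
    apply: bigsetU_measurable => i _.
    by rewrite -[X in measurable X]setTI; exact: measurable_snd.
  + by move=> i; rewrite -[X in measurable X]setTI; exact: measurable_snd.
  + apply/trivIsetP => i j _ _ ij; rewrite -preimage_setI.
    by move/trivIsetP : tF => /(_ i j I I ij) ->; rewrite preimage_set0.
  + apply: bigsetU_measurable => i _.
    by rewrite -[X in measurable X]setTI; exact: measurable_snd.
Qed.
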